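(* Let $S=P_1,P_2,\dots$ be a module sequence for a disjunctive program $P$. If $S$ is inconsistent, then every module sequence for $P$ is inconsistent.
   Context: A disjunctive program is a set of rules $A_1\vee\dots\vee A_m\leftarrow L_1,\dots,L_n$ ($m>0$, $n\ge0$), $A_j$ atoms, $L_i$ atoms or negated atoms $\mathtt{not}\,A$, possibly with function symbols. $\mathsf{Ground}(P)$ is its ground instantiation. For a set $M$ of ground atoms, $P^M$ is obtained from $\mathsf{Ground}(P)$ by deleting rules having some $\mathtt{not}\,B$ in the body with $B\in M$ and deleting negative literals from the remaining rules; $M$ is a stable model iff it is a minimal Herbrand model of $P^M$. A program is consistent iff it has a stable model. The dependency graph has ground atoms as vertices and an edge $A\to B$ whenever some $r\in\mathsf{Ground}(P)$ has $A$ in its head and $B$ occurring in $r$ (body or head); $A$ depends on $B$ if there is a directed path from $A$ to $B$ (every atom depends on itself). With $GH$ the set of ground head atoms of $\mathsf{Ground}(P)$ and an enumeration $p_1,p_2,\dots$ of $GH$, the induced module sequence is $P_1=\{r\in\mathsf{Ground}(P)\mid p_1$ depends on some atom of $head(r)\}$, $P_{i+1}=P_i\cup\{r\in\mathsf{Ground}(P)\mid p_{i+1}$ depends on some atom of $head(r)\}$; a module sequence for $P$ is one induced by some enumeration of $GH$. It is inconsistent if some $P_i$ is inconsistent. *)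

(* Defs.v *)
From Stdlib Require Import List Relations.
Import ListNotations.
Set Implicit Arguments.

Section Programs.

(* F : function symbols (constants are 0-ary function symbols);
   Pr : predicate symbols. Variables are natural numbers. *)
Variables F Pr : Type.

Inductive term : Type :=
| Var : nat -> term
| Fn : F -> list term -> term.

Fixpoint tvars (t : term) : list nat :=
  match t with
  | Var x => [x]
  | Fn _ ts => flat_map tvars ts
  end.

Fixpoint tsubst (s : nat -> term) (t : term) : term :=
  match t with
  | Var x => s x
  | Fn f ts => Fn f (map (tsubst s) ts)
  end.

Definition ground_term (t : term) : Prop := tvars t = [].

Record atom : Type := Atom { pred_of : Pr; args_of : list term }.

Definition ground_atom (a : atom) : Prop := Forall ground_term (args_of a).

Definition asubst (s : nat -> term) (a : atom) : atom :=
  Atom (pred_of a) (map (tsubst s) (args_of a)).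

Inductive literal : Type :=
| Pos : atom -> literal
| Neg : atom -> literal.

Definition lit_atom (l : literal) : atom :=
  match l with Pos a => a | Neg a => a end.

Definition lsubst (s : nat -> term) (l : literal) : literal :=
  match l with Pos a => Pos (asubst s a) | Neg a => Neg (asubst s a) end.

(* A rule  A_1 \/ ... \/ A_m <- L_1, ..., L_n  with m > 0. *)
Record rule : Type := Rule { head : list atom; body : list literal }.

Definition well_formed_rule (r : rule) : Prop := head r <> [].

Definition rsubst (s : nat -> term) (r : rule) : rule :=
  Rule (map (asubst s) (head r)) (map (lsubst s) (body r)).

Definition program := rule -> Prop.

Definition disjunctive_program (P : program) : Prop :=
  forall r, P r -> well_formed_rule r.

Definition ground_subst (s : nat -> term) : Prop :=
  forall x, ground_term (s x).

Definition Ground (P : program) : program :=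
  fun g => exists r s, P r /\ ground_subst s /\ g = rsubst s r.

Definition occurs_in (b : atom) (r : rule) : Prop :=
  In b (head r) \/ exists l, In l (body r) /\ lit_atom l = b.

Definition interp := atom -> Prop.

(* M satisfies the positive part of a ground rule r
   (negative literals are ignored: this is used on the reduct). *)
Definition sat_pos (M : interp) (r : rule) : Prop :=
  (forall a, In (Pos a) (body r) -> M a) -> exists h, In h (head r) /\ M h.

(* The reduct G^M: rules of G with no  not B  in the body with B in M,
   with negative literals deleted. We keep the rule and only look at its
   positive body when checking models (sat_pos). *)
Definition reduct (G : program) (M : interp) : program :=
  fun r => G r /\ (forall b, In (Neg b) (body r) -> ~ M b).

Definition herbrand_interp (M : interp) : Prop := forall a, M a -> ground_atom a.

Definition is_model (Q : program) (M : interp) : Prop :=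
  herbrand_interp M /\ forall r, Q r -> sat_pos M r.

Definition minimal_model (Q : program) (M : interp) : Prop :=
  is_model Q M /\
  forall N : interp, is_model Q N -> (forall a, N a -> M a) ->
    forall a, M a -> N a.

Definition stable_model (G : program) (M : interp) : Prop :=
  minimal_model (reduct G M) M.

Definition consistent (G : program) : Prop := exists M, stable_model G M.

Definition dep_edge (P : program) (a b : atom) : Prop :=
  exists r, Ground P r /\ In a (head r) /\ occurs_in b r.

Definition depends (P : program) : relation atom :=
  clos_refl_trans atom (dep_edge P).

Definition GH (P : program) (a : atom) : Prop :=
  exists r, Ground P r /\ In a (head r).

(* An enumeration p_1, p_2, ... of GH (indexed from 0 here):
   every p_i is in GH and every element of GH occurs. *)
Definition enumeration (P : program) (p : nat -> atom) : Prop :=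
  (forall i, GH P (p i)) /\ (forall a, GH P a -> exists i, p i = a).

(* The induced module sequence: module P p i = P_{i+1}. *)
Definition module (P : program) (p : nat -> atom) (i : nat) : program :=
  fun r => Ground P r /\
    exists k, k <= i /\ exists a, In a (head r) /\ depends P (p k) a.

Definition inconsistent_seq (S : nat -> program) : Prop :=
  exists i, ~ consistent (S i).

End Programs.

(* Main.v *)
Require Import Defs.
From Stdlib Require Import List Relations Classical Lia Arith.
Import ListNotations.

Section S.
Variables F Pr : Type.

Lemma heads_of_min (G : program F Pr) (M : interp F Pr) :
  stable_model G M -> forall a, M a -> exists r, G r /\ In a (Defs.head r).
Proof.
  intros [[Hh Hm] Hmin] a Ha.
  apply NNPP; intro Hn.
  set (N := fun x => M x /\ x <> a).
  assert (HN : is_model (reduct G M) N).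
  { split.
    - intros x [Hx _]; auto.
    - intros r Hr Hb.
      destruct (Hm r Hr) as [h [Hin HMh]].
      { intros b Hbb; apply Hb; auto. }
      exists h; split; auto; split; auto.
      intro; subst h. apply Hn; exists r; split; auto. destruct Hr; auto. }
  destruct (Hmin N HN (fun x H => proj1 H) a Ha). auto.
Qed.

Lemma split_lemma (GP U W : program F Pr) :
  (forall r, U r -> W r) -> (forall r, W r -> GP r) ->
  (forall r b r', U r -> occurs_in b r -> GP r' -> In b (Defs.head r') -> U r') ->
  consistent W -> consistent U.
Proof.
  intros HUW HWG Hcl [M HM].
  set (A := fun b => exists r, U r /\ In b (Defs.head r)).
  assert (K : forall b r, M b -> occurs_in b r -> U r -> A b).
  { intros b r Hb Ho Hr.
    destruct (@heads_of_min W M HM b Hb) as [r' [Hr' Hin]].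
    exists r'; split; auto. eapply Hcl; eauto. }
  destruct HM as [[Hh Hm] Hmin].
  exists (fun x => M x /\ A x).
  split; [split|].
  - intros x [Hx _]; auto.
  - intros r [HUr Hneg] Hb.
    destruct (Hm r) as [h [Hin HMh]].
    + split; auto. intros b Hbin HMb. apply (Hneg b Hbin). split; auto.
      eapply K; eauto. right; exists (Neg b); auto.
    + intros a Ha; apply Hb; auto.
    + exists h; split; auto; split; auto. exists r; auto.
  - intros N [HNh HNm] HNM.
    set (N' := fun x => N x \/ (M x /\ ~ A x)).
    assert (HN' : is_model (reduct W M) N').
    { split.
      - intros x [Hx|[Hx _]]; auto.
      - intros r [HWr Hneg] Hb.
        destruct (classic (U r)) as [HU|HU].
        + destruct (HNm r) as [h [Hin HNh']].
          * split; auto. intros b Hbin [HMb _]. apply (Hneg b Hbin HMb).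
          * intros a Ha. destruct (Hb a Ha) as [Hn|[HMa HnA]]; auto.
            exfalso; apply HnA. eapply K; eauto. right; exists (Pos a); auto.
          * exists h; split; auto; left; auto.
        + destruct (Hm r) as [h [Hin HMh]].
          * split; auto.
          * intros a Ha. destruct (Hb a Ha) as [Hn|[HMa _]]; auto.
            apply HNM; auto.
          * exists h; split; auto. right; split; auto.
            intros [r'' [HUr'' Hin'']]. apply HU.
            eapply Hcl; eauto. left; auto. }
    assert (Hsub : forall x, N' x -> M x).
    { intros x [Hx|[Hx _]]; auto. apply HNM; auto. }
    intros a [HMa HAa].
    destruct (Hmin N' HN' Hsub a HMa) as [Hn|[_ Hn]]; auto. contradiction.
Qed.

Lemma find_j (P : program F Pr) (p q : nat -> atom F Pr) :
  enumeration P p -> enumeration P q ->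
  forall i, exists j, forall k, k <= i -> exists m, m <= j /\ q m = p k.
Proof.
  intros [Hp1 _] [_ Hq2]. induction i.
  - destruct (Hq2 (p 0) (Hp1 0)) as [m Hm]. exists m.
    intros k Hk. assert (k = 0) by lia. subst. exists m; auto.
  - destruct IHi as [j Hj]. destruct (Hq2 (p (S i)) (Hp1 (S i))) as [m Hm].
    exists (max j m). intros k Hk.
    destruct (Nat.eq_dec k (S i)).
    + subst. exists m; split; auto; lia.
    + destruct (Hj k) as [m' [H1 H2]]; [lia|]. exists m'; split; auto; lia.
Qed.

End S.

Theorem theorem3p9 (F Pr : Type) (P : program F Pr)
  (HP : disjunctive_program P) (p : nat -> atom F Pr)
  (Hp : enumeration P p) :
  inconsistent_seq (module P p) ->
  forall q : nat -> atom F Pr, enumeration P q ->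
    inconsistent_seq (module P q).
Proof.
  intros [i Hi] q Hq.
  destruct (@find_j F Pr P p q Hp Hq i) as [j Hj].
  exists j. intro Hc. apply Hi.
  apply (@split_lemma F Pr (Ground P) (module P p i) (module P q j)); auto.
  - intros r [HG [k [Hk [a [Ha Hd]]]]]. split; auto.
    destruct (Hj k Hk) as [m [Hm Heq]].
    exists m; split; auto; exists a; split; auto. rewrite Heq; auto.
  - intros r [HG _]; auto.
  - intros r b r' [HG [k [Hk [a [Ha Hd]]]]] Ho HG' Hb.
    split; auto. exists k; split; auto. exists b; split; auto.
    eapply rt_trans; [exact Hd|]. apply rt_step. exists r; auto.
Qed.
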